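(* Let $\mathcal G=(\mathcal V,\mathcal E)$ be a connected undirected graph on $N\ge 2$ nodes, let $a(0)\in\mathbb R^N$ be arbitrary, let $p\in[0,1]$, and let $(a(l))_{l\ge 0}$ be generated by the sample greedy gossip (SGG) iteration with node activation probability $p$. Then $$\lim_{l\to\infty}\mathbb E\big[\|a(l)-\bar a\|^2\big]=0,$$ i.e. SGG converges (in mean square) to the average state $\bar a$.
   Context: Graph: $\mathcal V=\{1,\dots,N\}$, and $\mathcal N_s=\{t\in\mathcal V: (s,t)\in\mathcal E,\ t\neq s\}$ is the neighbour set of node $s$ (nonempty for all $s$ by connectivity). Each node $s$ holds a scalar $a_s(l)$; $a(l)=(a_1(l),\dots,a_N(l))^T$. $\bar a\in\mathbb R^N$ is the vector all of whose entries equal $\frac1N\sum_{s=1}^N a_s(0)$. $\|\cdot\|$ is the Euclidean norm. SGG iteration (step $l\ge1$, all random choices independent across steps and of the past): a node $s$ is chosen uniformly at random from $\mathcal V$; each $t\in\mathcal N_s$ independently joins an active set $\mathcal A_s\subseteq\mathcal N_s$ with probability $p$. If $\mathcal A_s\neq\emptyset$, let $t^*$ be a maximiser of $(a_s(l-1)-a_t(l-1))^2$ over $t\in\mathcal A_s$ (ties broken arbitrarily); if $\mathcal A_s=\emptyset$, let $t^*$ be chosen uniformly at random from $\mathcal N_s$. Then $a_s(l)=a_{t^*}(l)=\tfrac12\big(a_s(l-1)+a_{t^*}(l-1)\big)$, and $a_u(l)=a_u(l-1)$ for all $u\notin\{s,t^*\}$. *)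

(* Defs.v *)
From HB Require Import structures.
From mathcomp Require Import all_boot all_order all_algebra.
Set Implicit Arguments. Unset Strict Implicit. Unset Printing Implicit Defensive.
Import Order.TTheory GRing.Theory Num.Theory.
Local Open Scope ring_scope.

Section SGG.
Variables (R : archiRealFieldType) (T : finType) (e : rel T).

Definition nbrs (s : T) : {set T} := [set t | e s t].

Definition avg_update (a : T -> R) (s t : T) : T -> R :=
  fun u => if (u == s) || (u == t) then (a s + a t) / 2%:R else a u.

(* probability that the active set equals A (A a subset of N_s) *)
Definition act_weight (p : R) (s : T) (A : {set T}) : R :=
  p ^+ #|A| * (1 - p) ^+ (#|nbrs s| - #|A|).

Definition greedy_choice (choose : (T -> R) -> T -> {set T} -> T) : Prop :=
  forall (a : T -> R) (s : T) (A : {set T}), A != set0 -> A \subset nbrs s ->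
    choose a s A \in A /\
    (forall t, t \in A -> (a s - a t) ^+ 2 <= (a s - a (choose a s A)) ^+ 2).

(* one SGG step: expectation of f(a(l)) given a(l-1) = a *)
Definition sgg_step (p : R) (choose : (T -> R) -> T -> {set T} -> T)
  (f : (T -> R) -> R) (a : T -> R) : R :=
  (#|T|%:R)^-1 * \sum_(s : T) \sum_(A in powerset (nbrs s))
     act_weight p s A *
     (if A == set0 then
        (#|nbrs s|%:R)^-1 * \sum_(t in nbrs s) f (avg_update a s t)
      else f (avg_update a s (choose a s A))).

(* sgg_exp tb k n f a = E[ f(a(k+n)) | a(k) = a ], where step l uses the
   tie-breaking rule tb l *)
Fixpoint sgg_exp (p : R) (tb : nat -> (T -> R) -> T -> {set T} -> T)
  (k n : nat) (f : (T -> R) -> R) (a : T -> R) : R :=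
  match n with
  | 0 => f a
  | n'.+1 => sgg_step p (tb k.+1) (sgg_exp p tb k.+1 n' f) a
  end.

Definition avg (a : T -> R) : R := (#|T|%:R)^-1 * \sum_(u : T) a u.

Definition sqdist_to (c : R) (a : T -> R) : R := \sum_(u : T) (a u - c) ^+ 2.

End SGG.

(* Main.v *)
Require Import Defs.
From HB Require Import structures.
From mathcomp Require Import all_boot all_order all_algebra.
From mathcomp Require Import ring lra.
Import Order.TTheory GRing.Theory Num.Theory.
Local Open Scope ring_scope.
Set Implicit Arguments. Unset Strict Implicit. Unset Printing Implicit Defensive.

Section Aux.
Variables (R : archiRealFieldType) (T : finType) (e : rel T).

Lemma sum2 (F : T -> R) s t : s != t ->
  \sum_u F u = F s + F t + \sum_(u | (u != s) && (u != t)) F u.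
Proof.
move=> st; rewrite (bigD1 s) //= (bigD1 t) /=; last by rewrite eq_sym.
by rewrite addrA.
Qed.

Lemma two_neq0 : (2%:R : R) != 0. Proof. by rewrite pnatr_eq0. Qed.

Lemma upd_sum (a : T -> R) s t : \sum_u avg_update a s t u = \sum_u a u.
Proof.
have h2 := two_neq0.
have [-> | st] := eqVneq s t.
  apply: eq_bigr => u _; rewrite /avg_update orbb; case: eqP => [->|//].
  by field.
rewrite (sum2 _ st) (sum2 a st); congr (_ + _).
  rewrite /avg_update !eqxx orbT /=; by field.
apply: eq_bigr => u /andP[us ut]; by rewrite /avg_update (negbTE us) (negbTE ut).
Qed.

Lemma avg_upd (a : T -> R) s t : avg (avg_update a s t) = avg a.
Proof. by rewrite /avg upd_sum. Qed.

Lemma upd_V (c : R) (a : T -> R) s t :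
  sqdist_to c (avg_update a s t) = sqdist_to c a - (a s - a t) ^+ 2 / 2%:R.
Proof.
have h2 := two_neq0.
have [-> | st] := eqVneq s t.
  rewrite subrr expr0n /= mul0r subr0; apply: eq_bigr => u _.
  rewrite /avg_update orbb; case: eqP => [->|//]; congr (_ ^+ _ ); by field.
rewrite /sqdist_to (sum2 _ st) (sum2 (fun u => (a u - c) ^+ 2) st).
rewrite (eq_bigr (fun u => (a u - c) ^+ 2)); last first.
  by move=> u /andP[us ut]; rewrite /avg_update (negbTE us) (negbTE ut).
rewrite /avg_update !eqxx orbT /=; by field.
Qed.

Lemma weights_sum (p : R) (S : {set T}) :
  \sum_(A in powerset S) p ^+ #|A| * (1 - p) ^+ (#|S| - #|A|) = 1.
Proof.
pose F i := if i \in S then p else 0.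
pose G i := if i \in S then 1 - p else 1.
have := @bigA_distr R 0 1 *%R +%R T F G.
have -> : \prod_i (F i + G i) = 1.
  by apply: big1 => i _; rewrite /F /G; case: (i \in S); rewrite ?add0r // addrC subrK.
move=> /esym H; rewrite -[RHS]H.
rewrite [RHS](bigID (fun J : {set T} => J \subset S)) /=.
rewrite [X in _ = _ + X]big1 ?addr0; last first.
  move=> J /subsetPn [i iJ iS].
  by rewrite (bigD1 i) //= iJ /F (negbTE iS) mul0r.
apply: eq_big => [J|J JS]; first by rewrite powersetE.
rewrite powersetE in JS.
rewrite (bigID [in J]) /=.
rewrite (eq_bigr (fun _ => p)); last by move=> i iJ; rewrite iJ /F (subsetP JS i iJ).
rewrite prodr_const.
rewrite (bigID [in S]) /= [X in _ = _ * (_ * X)]big1 ?mulr1; last first.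
  by move=> i /andP[iJ iS]; rewrite (negbTE iJ) /G (negbTE iS).
rewrite (eq_bigr (fun _ => 1 - p)); last by move=> i /andP[iJ iS]; rewrite (negbTE iJ) /G iS.
rewrite (eq_bigl (fun i => i \in S :\: J)); last by move=> i; rewrite in_setD.
by rewrite prodr_const cardsD (setIidPr JS).
Qed.


Lemma w_ge0 (p : R) s A : 0 <= p -> p <= 1 -> 0 <= act_weight e p s A.
Proof. by move=> h0 h1; rewrite /act_weight mulr_ge0 // exprn_ge0 // subr_ge0. Qed.

Lemma step_scale p ch (k : R) (f : (T -> R) -> R) a :
  sgg_step e p ch (fun x => k * f x) a = k * sgg_step e p ch f a.
Proof.
rewrite /sgg_step mulrCA; congr (_ * _); rewrite [RHS]mulr_sumr; apply: eq_bigr => s _.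
rewrite [RHS]mulr_sumr; apply: eq_bigr => A _; rewrite mulrCA; congr (_ * _).
case: ifP => _ //; rewrite mulrCA [in RHS]mulr_sumr //.
Qed.

Lemma step_mono p ch (f g : (T -> R) -> R) a : 0 <= p -> p <= 1 ->
  (forall s t, f (avg_update a s t) <= g (avg_update a s t)) ->
  sgg_step e p ch f a <= sgg_step e p ch g a.
Proof.
move=> h0 h1 H; rewrite /sgg_step ler_wpM2l ?invr_ge0 ?ler0n //.
apply: ler_sum => s _; apply: ler_sum => A _; rewrite ler_wpM2l ?w_ge0 //.
case: ifP => _ //; rewrite ler_wpM2l ?invr_ge0 ?ler0n //.
by apply: ler_sum => t _.
Qed.

Lemma step_ge0 p ch (f : (T -> R) -> R) a : 0 <= p -> p <= 1 ->
  (forall s t, 0 <= f (avg_update a s t)) -> 0 <= sgg_step e p ch f a.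
Proof.
move=> h0 h1 H; have := @step_mono p ch (fun x => 0 * f x) f a h0 h1.
rewrite step_scale mul0r; apply => s t; rewrite mul0r; exact: H.
Qed.

Definition Ed (a : T -> R) := \sum_s \sum_(t in nbrs e s) (a s - a t) ^+ 2.

Lemma Ed_ge0 a : 0 <= Ed a.
Proof. by rewrite /Ed sumr_ge0 // => s _; rewrite sumr_ge0 // => t _; exact: sqr_ge0. Qed.

Lemma half_pow (p : R) d N : 0 <= p -> p <= 1 -> (d <= N)%N ->
  (2%:R ^+ N)^-1 <= (1 - p) ^+ d + p ^+ d.
Proof.
move=> h0 h1 dN.
have h20 : (0 : R) <= 2%:R^-1 by rewrite invr_ge0 ler0n.
have h21 : (2%:R : R)^-1 <= 1 by rewrite invf_le1 ?ltr0n ?ler1n.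
have key (x : R) : 2%:R^-1 <= x -> (2%:R ^+ N)^-1 <= x ^+ d.
  move=> hx; rewrite -exprVn; apply: le_trans (ler_wiXn2l h20 h21 dN) _.
  by apply: lerXn2r; rewrite ?nnegrE //; apply: le_trans hx.
case: (lerP (2%:R^-1) p) => hp.
  by apply: le_trans (key p hp) _; rewrite lerDr exprn_ge0 // subr_ge0.
apply: le_trans (key (1 - p) _) _; last by rewrite lerDl exprn_ge0.
have : (2%:R : R)^-1 + 2%:R^-1 = 1 by field.
move=> H; lra.
Qed.

Lemma step_contract p ch c a : 0 <= p -> p <= 1 -> greedy_choice e ch ->
  (forall s, 0 < #|nbrs e s|)%N -> (0 < #|T|)%N ->
  sgg_step e p ch (sqdist_to c) a <=
  sqdist_to c a - (#|T|%:R)^-1 * ((#|T|%:R)^-1 * (2%:R ^+ #|T|)^-1 * Ed a) / 2%:R.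
Proof.
move=> h0 h1 hch hd hT.
have h2 := two_neq0.
set n := (#|T|%:R : R).
have n0 : 0 < n by rewrite ltr0n.
pose D s t := (a s - a t) ^+ 2.
pose h s A := if A == set0 then (#|nbrs e s|%:R)^-1 * \sum_(t in nbrs e s) D s t
              else D s (ch a s A).
have hge0 s A : 0 <= h s A.
  rewrite /h; case: ifP => _; last exact: sqr_ge0.
  by rewrite mulr_ge0 ?invr_ge0 ?ler0n ?sumr_ge0 // => t _; exact: sqr_ge0.
have Is s : \sum_(A in powerset (nbrs e s)) act_weight e p s A *
     (if A == set0 then (#|nbrs e s|%:R)^-1 *
        \sum_(t in nbrs e s) sqdist_to c (avg_update a s t)
      else sqdist_to c (avg_update a s (ch a s A)))
  = sqdist_to c a - (\sum_(A in powerset (nbrs e s)) act_weight e p s A * h s A) / 2%:R.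
  have dne : (#|nbrs e s|%:R : R) != 0 by rewrite pnatr_eq0 -lt0n hd.
  transitivity (\sum_(A in powerset (nbrs e s))
     (act_weight e p s A * sqdist_to c a - act_weight e p s A * h s A / 2%:R)).
    apply: eq_bigr => A _; rewrite /h /D; case: ifP => _; last by rewrite upd_V; ring.
    under eq_bigr do rewrite upd_V.
    by rewrite sumrB sumr_const -mulr_suml -mulr_natr; field.
  have W : \sum_(A in powerset (nbrs e s)) act_weight e p s A = 1 :=
    weights_sum p (nbrs e s).
  by rewrite sumrB -mulr_suml -mulr_suml W mul1r.
have Hs s : (n^-1 * (2%:R ^+ #|T|)^-1) * \sum_(t in nbrs e s) D s t <=
            \sum_(A in powerset (nbrs e s)) act_weight e p s A * h s A.
  set S := nbrs e s.
  have S0 : S != set0 by rewrite -card_gt0 hd.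
  have dpos : (0 : R) < #|S|%:R by rewrite ltr0n hd.
  have [chS hmax] := hch a s S S0 (subxx S).
  rewrite (bigD1 set0) /=; last by rewrite powersetE sub0set.
  rewrite (bigD1 S) /=; last by rewrite powersetE subxx S0.
  rewrite addrA; apply: le_trans (_ : _ <= act_weight e p s set0 * h s set0 +
     act_weight e p s S * h s S) _; last first.
    by rewrite lerDl sumr_ge0 // => A _; rewrite mulr_ge0 ?w_ge0.
  rewrite /h eqxx (negbTE S0) /act_weight cards0 subn0 expr0 mul1r subnn expr0 mulr1.
  set M := \sum_(t in S) D s t.
  set d := #|S|.
  have M0 : 0 <= M by rewrite sumr_ge0 // => t _; exact: sqr_ge0.
  have hM : d%:R^-1 * M <= D s (ch a s S).
    rewrite ler_pdivrMl // mulr_natl -sumr_const; apply: ler_sum => t tS; exact: hmax.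
  have hw : (2%:R ^+ #|T|)^-1 <= (1 - p) ^+ d + p ^+ d by apply: half_pow => //; exact: max_card.
  have hn : n^-1 <= d%:R^-1 by rewrite lef_pV2 ?posrE // ler_nat max_card.
  apply: le_trans (_ : _ <= ((1 - p) ^+ d + p ^+ d) * (d%:R^-1 * M)) _.
    rewrite [n^-1 * _]mulrC -mulrA; apply: ler_pM => //; first by rewrite invr_ge0 exprn_ge0.
      by rewrite mulr_ge0 // invr_ge0 ler0n.
    exact: ler_wpM2r.
  by rewrite mulrDl lerD2l; apply: ler_wpM2l; rewrite ?exprn_ge0.
rewrite /sgg_step -/n (eq_bigr _ (fun s _ => Is s)).
rewrite sumrB.
have -> : \sum_(s : T) sqdist_to c a = sqdist_to c a *+ #|T|.
  by rewrite -sumr_const; apply: eq_bigl.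
rewrite -mulr_suml.
have hH : (n^-1 * (2%:R ^+ #|T|)^-1) * Ed a <=
   \sum_s \sum_(A in powerset (nbrs e s)) act_weight e p s A * h s A.
  by rewrite /Ed big_distrr; apply: ler_sum => s _; exact: Hs.
set X := \sum_s _.
have -> : n^-1 * (sqdist_to c a *+ #|T| - X / 2%:R) = sqdist_to c a - n^-1 * X / 2%:R.
  by rewrite -mulr_natr -/n; field; rewrite lt0r_neq0.
rewrite lerD2l lerN2 ler_wpM2r ?invr_ge0 ?ler0n // ler_wpM2l ?invr_ge0 ?ler0n //.
Qed.


Lemma mean_min (a : T -> R) (x : R) : (0 < #|T|)%N ->
  sqdist_to (avg a) a <= sqdist_to x a.
Proof.
move=> hT; set c := avg a.
have n0 : (#|T|%:R : R) != 0 by rewrite pnatr_eq0 -lt0n.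
have hs : \sum_u a u = c * #|T|%:R by rewrite /c /avg; field.
rewrite -subr_ge0 /sqdist_to -sumrB.
have -> : \sum_u ((a u - x) ^+ 2 - (a u - c) ^+ 2) = (c - x) ^+ 2 * #|T|%:R.
  transitivity (\sum_u ((2%:R * (c - x)) * a u) - \sum_(u : T) (c ^+ 2 - x ^+ 2)).
    by rewrite -sumrB; apply: eq_bigr => u _; ring.
  rewrite -mulr_sumr hs.
  have -> : \sum_(u : T) (c ^+ 2 - x ^+ 2) = (c ^+ 2 - x ^+ 2) *+ #|T|.
    by rewrite -sumr_const; apply: eq_bigl.
  rewrite -mulr_natr; ring.
by rewrite mulr_ge0 ?sqr_ge0 ?ler0n.
Qed.

Lemma edge_le (a : T -> R) x y : e x y -> (a x - a y) ^+ 2 <= Ed a.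
Proof.
move=> exy; rewrite /Ed (bigD1 x) //= (bigD1 y) /=; last by rewrite inE.
rewrite -addrA lerDl addr_ge0 ?sumr_ge0 // => [t _|s _]; first exact: sqr_ge0.
by rewrite sumr_ge0 // => t _; exact: sqr_ge0.
Qed.

Lemma path_le (a : T -> R) x q : path e x q ->
  (a x - a (last x q)) ^+ 2 <= 4%:R ^+ size q * Ed a.
Proof.
have E0 := Ed_ge0 a.
elim: q x => [|y q IH] x /=; first by rewrite subrr expr0n /= expr0 mul1r.
move=> /andP[exy hq]; have H1 := IH y hq; have H2 := edge_le a exy.
have K1 : 1 <= (4%:R : R) ^+ size q by rewrite exprn_ege1 // ler1n.
set u := a x; set v := a y; set w := a (last y q).
set K := (4%:R : R) ^+ size q; set E := Ed a.
have H3 : (u - w) ^+ 2 <= 2%:R * (u - v) ^+ 2 + 2%:R * (v - w) ^+ 2.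
  have := sqr_ge0 ((u - v) - (v - w)); move=> h; nra.
have H4 : 0 <= (K - 1) * E by rewrite mulr_ge0 // subr_ge0.
apply: le_trans H3 _.
have -> : 4%:R ^+ (size q).+1 * E = 2%:R * E + 2%:R * (K * E) + 2%:R * ((K - 1) * E) by rewrite exprS /K; ring.
rewrite -addrA; apply: lerD; first by rewrite ler_wpM2l ?ler0n.
apply: le_trans (_ : _ <= 2%:R * (K * E)) _; first by rewrite ler_wpM2l ?ler0n.
by rewrite lerDl mulr_ge0 ?ler0n.
Qed.

Lemma poincare (a : T -> R) (v0 : T) : (forall x y, connect e x y) ->
  sqdist_to (avg a) a <= (#|T|%:R * 4%:R ^+ #|T|) * Ed a.
Proof.
move=> conn. have hT : (0 < #|T|)%N by apply/card_gt0P; exists v0.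
apply: le_trans (mean_min a (a v0) hT) _.
have -> : (#|T|%:R * 4%:R ^+ #|T|) * Ed a = \sum_(u : T) 4%:R ^+ #|T| * Ed a.
  by rewrite -mulrA mulr_natl -sumr_const; apply: eq_bigl.
apply: ler_sum => u _.
case/connectP: (conn v0 u) => q hq ->.
case: (shortenP hq) => q' hq' uq _.
rewrite -sqrrN opprB; apply: le_trans (path_le a hq') _.
rewrite ler_wpM2r ?Ed_ge0 // ler_weXn2l ?ler1n //.
move/card_uniqP: uq => uq.
have := max_card (mem (v0 :: q')); rewrite uq /= => h; exact: ltnW h.
Qed.

End Aux.

Theorem theorem1 (R : archiRealFieldType) (T : finType) (e : rel T)
  (e_sym : symmetric e) (e_irr : irreflexive e)
  (e_conn : forall x y : T, connect e x y)
  (hN : (1 < #|T|)%N)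
  (a0 : T -> R) (p : R) (hp0 : 0 <= p) (hp1 : p <= 1)
  (tb : nat -> (T -> R) -> T -> {set T} -> T)
  (htb : forall l, greedy_choice e (tb l)) :
  forall eps : R, 0 < eps -> exists L : nat, forall l : nat, (L <= l)%N ->
    `| sgg_exp e p tb 0 l (sqdist_to (avg a0)) a0 | < eps.
Proof.
move=> eps eps0.
have hT : (0 < #|T|)%N by apply: ltn_trans hN.
have [v0 _] : exists v0 : T, true by move/card_gt0P: hT => [v _]; exists v.
have hd : forall s, (0 < #|nbrs e s|)%N.
  move=> s.
  have : (0 < #|[set~ s]|)%N by rewrite cardsC1 -subn1 subn_gt0.
  case/card_gt0P => y; rewrite !inE => ys.
  case/connectP: (e_conn s y) => [[|z q]] /=.
    by move=> _ yeq; rewrite yeq eqxx in ys.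
  by move=> /andP[esz _] _; apply/card_gt0P; exists z; rewrite inE.
set c := avg a0.
set n := (#|T|%:R : R).
have n0 : 0 < n by rewrite ltr0n.
set P := n * 4%:R ^+ #|T|.
have P0 : 0 < P by rewrite mulr_gt0 // exprn_gt0 // ltr0n.
set k := n^-1 * (n^-1 * (2%:R ^+ #|T|)^-1) / 2%:R.
have k0 : 0 < k by rewrite /k !mulr_gt0 ?invr_gt0 ?exprn_gt0 ?ltr0n.
have k1 : k <= 1.
  have n1 : n^-1 <= 1 by rewrite invf_le1 // ler1n.
  have t1 : (2%:R ^+ #|T| : R)^-1 <= 1 by rewrite invf_le1 ?exprn_gt0 ?ltr0n // exprn_ege1 ?ler1n.
  have t2 : (2%:R : R)^-1 <= 1 by rewrite invf_le1 ?ltr0n ?ler1n.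
  rewrite /k; apply: mulr_ile1; rewrite ?mulr_ge0 ?invr_ge0 ?ler0n ?exprn_ge0 //.
  by apply: mulr_ile1; rewrite ?mulr_ge0 ?invr_ge0 ?ler0n ?exprn_ge0 // mulr_ile1 ?invr_ge0 ?ler0n ?exprn_ge0.
set g := k / P.
have g0 : 0 < g by rewrite divr_gt0.
have g1 : g <= 1.
  rewrite /g; apply: (mulr_ile1 (ltW k0)) k1 _; first by rewrite invr_ge0 ltW.
  rewrite invf_le1 // /P; have q1 : 1 <= n by rewrite ler1n.
  have q2 : 1 <= (4%:R : R) ^+ #|T| by rewrite exprn_ege1 // ler1n.
  nra.
set rho := 1 - g.
have rho0 : 0 <= rho by rewrite subr_ge0.
have key : forall l a, avg a = c ->
    sgg_step e p (tb l) (sqdist_to c) a <= rho * sqdist_to c a.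
  move=> l a ha.
  apply: le_trans (step_contract c a hp0 hp1 (htb l) hd hT) _.
  have hE : sqdist_to c a / P <= Ed e a.
    by rewrite mulrC ler_pdivrMl // -ha poincare.
  have -> : rho * sqdist_to c a = sqdist_to c a - k * (sqdist_to c a / P)
    by rewrite /rho /g; ring.
  have -> : n^-1 * (n^-1 * (2%:R ^+ #|T|)^-1 * Ed e a) / 2%:R = k * Ed e a
    by rewrite /k; ring.
  by rewrite lerD2l lerN2 ler_wpM2l // ltW.
have ind : forall l k0 a, avg a = c ->
    0 <= sgg_exp e p tb k0 l (sqdist_to c) a <= rho ^+ l * sqdist_to c a.
  elim => [|l IH] kk a ha /=.
    by rewrite expr0 mul1r lexx andbT /sqdist_to sumr_ge0 // => u _; exact: sqr_ge0.
  have hu s t : avg (avg_update a s t) = c by rewrite avg_upd.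
  apply/andP; split.
    by apply: step_ge0 => // s t; case/andP: (IH kk.+1 _ (hu s t)).
  apply: le_trans (@step_mono _ _ e p (tb kk.+1) _ (fun x => rho ^+ l * sqdist_to c x) a hp0 hp1 _) _.
    by move=> s t; case/andP: (IH kk.+1 _ (hu s t)).
  rewrite step_scale exprSr -mulrA ler_wpM2l ?exprn_ge0 //; exact: key.
have dec : forall l : nat, rho ^+ l * (1 + l%:R * g) <= 1.
  elim => [|l IH]; first by rewrite expr0 mul1r mul0r addr0.
  rewrite exprSr -mulrA; apply: le_trans IH; rewrite ler_wpM2l ?exprn_ge0 //.
  rewrite /rho -natr1; have l0 : (0 : R) <= l%:R by rewrite ler0n.
  nra.
set V0 := sqdist_to c a0.
have V00 : 0 <= V0 by rewrite /V0 /sqdist_to sumr_ge0 // => u _; exact: sqr_ge0.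
set B := V0 / (g * eps).
have B0 : 0 <= B by rewrite /B divr_ge0 // ltW // mulr_gt0.
exists (Num.bound B) => l Ll.
have [h1 h2] := andP (ind l 0%N a0 erefl).
rewrite ger0_norm //; apply: le_lt_trans h2 _.
have hB : B < l%:R by apply: lt_le_trans (archi_boundP B0) _; rewrite ler_nat.
have hV : V0 < l%:R * g * eps.
  have ge : 0 < g * eps by rewrite mulr_gt0.
  move: hB; rewrite /B (ltr_pdivrMr _ _ ge) => h; by rewrite -mulrA.
set r := rho ^+ l.
have r0 : 0 <= r by rewrite exprn_ge0.
have hr := dec l.
set y := l%:R * g.
have y0 : 0 <= y by rewrite mulr_ge0 ?ler0n // ltW.
have q1 : r * V0 * (1 + y) <= V0.
  by rewrite mulrAC -[X in _ <= X]mul1r ler_wpM2r.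
have q3 : V0 < eps * (1 + y) by move: hV; rewrite -/y => hV; rewrite mulrDr mulr1 mulrC; apply: lt_le_trans hV _; rewrite lerDr ltW.
have q2 : r * V0 * (1 + y) < eps * (1 + y) by apply: le_lt_trans q1 q3.
by move: q2; rewrite ltr_pM2r // ltr_wpDr.
Qed.
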